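(* In the relaxed greedy algorithm described in the context, fix a phase $i\ge1$. For every inter-cluster edge $\{a,b\}$ of the cluster graph $H_{i-1}$, we have ${\tt sp}_{G'_{i-1}}(a,b)\le(2\delta+1)W_{i-1}$.
   Context: Setting. Let $G=(V,E)$ be an $n$-node $d$-dimensional $\alpha$-quasi unit ball graph ($0<\alpha\le1$): its vertices are points of $\mathbb{R}^d$, $|uv|$ is Euclidean distance, $|uv|\le\alpha$ implies $\{u,v\}\in E$, and $|uv|>1$ implies $\{u,v\}\notin E$. Edge weights are Euclidean lengths. ${\tt sp}_J(x,y)$ denotes shortest-path length in a graph $J$. Parameters: $r>1$ and $0<\delta<1$. Set $W_i=r^i\alpha/n$. $G'_{i-1}$ is any spanning subgraph of $G$; in the algorithm it is the partial spanner at the end of phase $i-1$. Cluster cover of $G'_{i-1}$ of radius $\delta W_{i-1}$: a set of centers $a$ with clusters $C_a$ partitioning $V$, such that - ${\tt sp}_{G'_{i-1}}(a,x)\le\delta W_{i-1}$ for $x\in C_a$; - ${\tt sp}_{G'_{i-1}}(a,b)>\delta W_{i-1}$ for distinct centers $a,b$. Cluster graph $H_{i-1}$: its vertex set is $V$ and it has two kinds of edges. - Intra-cluster edges: $\{a,x\}$ for each center $a$ and each $x\in C_a$. - Inter-cluster edges: $\{a,b\}$ for centers $a\ne b$ such that either ${\tt sp}_{G'_{i-1}}(a,b)\le W_{i-1}$, or some edge of $G'_{i-1}$ has one endpoint in $C_a$ and the other in $C_b$. Each edge $\{p,q\}$ of $H_{i-1}$ has weight ${\tt sp}_{G'_{i-1}}(p,q)$.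 *)

(* Defs.v *)
From HB Require Import structures.
From mathcomp Require Import all_boot all_order all_algebra.
From mathcomp Require Import constructive_ereal.
Set Implicit Arguments. Unset Strict Implicit. Unset Printing Implicit Defensive.
Import Order.TTheory GRing.Theory Num.Theory.
Local Open Scope ring_scope.

Section Defs.
Variables (R : rcfType) (n d : nat).

Definition edist (p q : 'rV[R]_d) : R :=
  Num.sqrt (\sum_(k < d) (p ord0 k - q ord0 k) ^+ 2).

Fixpoint walk_len (pos : 'I_n -> 'rV[R]_d) (x : 'I_n) (s : seq 'I_n) : R :=
  match s with
  | [::] => 0
  | y :: s' => edist (pos x) (pos y) + walk_len pos y s'
  end.

(* Shortest-path length sp_J(x,y) in the graph J (edge relation J) with
   Euclidean edge weights; +oo if y is unreachable from x.  It is the minimum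
   of the lengths of all walks x = v0, v1, ..., vk = y with k < n edges
   (every simple path has fewer than n edges, and since weights are
   nonnegative the shortest walk is attained by a simple path). *)
Definition sp (pos : 'I_n -> 'rV[R]_d) (J : rel 'I_n) (x y : 'I_n) : \bar R :=
  \big[Order.min/+oo%E]_(k < n)
    \big[Order.min/+oo%E]_(t : k.-tuple 'I_n | path J x t && (last x t == y))
       (walk_len pos x t)%:E.

Definition quasi_UBG (alpha : R) (pos : 'I_n -> 'rV[R]_d) (E : rel 'I_n) :=
  [/\ injective pos,
      irreflexive E, symmetric E,
      (forall u v, u != v -> edist (pos u) (pos v) <= alpha -> E u v) &
      (forall u v, E u v -> edist (pos u) (pos v) <= 1)].

Definition cluster_cover (pos : 'I_n -> 'rV[R]_d) (G' : rel 'I_n) (rad : R)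
    (A : {set 'I_n}) (C : 'I_n -> {set 'I_n}) :=
  [/\ (forall x, exists a, (a \in A) && (x \in C a)),
      (forall a b x, a \in A -> b \in A -> x \in C a -> x \in C b -> a = b),
      (forall a x, a \in A -> x \in C a -> (sp pos G' a x <= rad%:E)%E) &
      (forall a b, a \in A -> b \in A -> a != b -> (rad%:E < sp pos G' a b)%E)].

Definition inter_cluster_edge (pos : 'I_n -> 'rV[R]_d) (G' : rel 'I_n) (W : R)
    (A : {set 'I_n}) (C : 'I_n -> {set 'I_n}) (a b : 'I_n) :=
  [/\ a \in A, b \in A, a != b &
      ((sp pos G' a b <= W%:E)%E \/
       exists x y, [/\ x \in C a, y \in C b & G' x y])].

End Defs.

Definition Wph (R : rcfType) (r alpha : R) (n i : nat) : R := r ^+ i * alpha / n%:R.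

(* Main.v *)
Require Import Defs.
From HB Require Import structures.
From mathcomp Require Import all_boot all_order all_algebra.
From mathcomp Require Import constructive_ereal.
From mathcomp Require Import zify ring lra.
Import Order.TTheory GRing.Theory Num.Theory.
Local Open Scope ring_scope.

Section Aux.
Variables (R : rcfType) (n d : nat) (pos : 'I_n -> 'rV[R]_d) (G' : rel 'I_n).

Lemma edist_ge0 p q : 0 <= @edist R d p q.
Proof. exact: sqrtr_ge0. Qed.

Lemma walk_len_ge0 x s : 0 <= walk_len pos x s.
Proof.
elim: s x => [|y s IH] x /=; first by [].
by rewrite addr_ge0 // edist_ge0.
Qed.

Lemma walk_len_cat x s1 s2 :
  walk_len pos x (s1 ++ s2) = walk_len pos x s1 + walk_len pos (last x s1) s2.
Proof.
elim: s1 x => [|y s IH] x /=; first by rewrite add0r.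
by rewrite IH addrA.
Qed.

Lemma shorten_walk m : forall u s, (size s <= m)%N ->
  path G' u s -> exists s', [/\ path G' u s', last u s' = last u s,
     uniq (u :: s'), {subset s' <= s} & walk_len pos u s' <= walk_len pos u s].
Proof.
elim: m => [|m IH] u s.
  by rewrite leqn0 => /nilP -> _; exists [::]; split.
move=> hs hp.
case: (boolP (u \in s)) => hu.
  have hsp := cat_take_drop (index u s) s.
  move: hsp; rewrite (drop_nth u); last by rewrite index_mem.
  rewrite nth_index // => hsp.
  set s1 := take _ _ in hsp; set s2 := drop _ _ in hsp.
  have hp2 : path G' u s2.
    by move: hp; rewrite -hsp cat_path => /andP [_ /= /andP [_ ->]].
  have hsz : (size s2 <= m)%N.
    have : size s = (size s1 + (size s2).+1)%N by rewrite -hsp size_cat.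
    lia.
  have [s' [h1 h2 h3 h4 h5]] := IH u s2 hsz hp2.
  exists s'; split => //.
  - by rewrite h2 -[in RHS]hsp last_cat.
  - by move=> z /h4 zs; rewrite -hsp mem_cat in_cons zs !orbT.
  - apply: (le_trans h5).
    by rewrite -[in X in _ <= X]hsp walk_len_cat /= addrA -[X in X <= _]add0r lerD2r addr_ge0 ?walk_len_ge0 ?edist_ge0.
case: s hs hp hu => [|y s] hs hp hu; first by exists [::]; split.
move: hp => /= /andP [huy hp].
have [s' [h1 h2 h3 h4 h5]] := IH y s hs hp.
exists (y :: s'); split => //=.
- by rewrite huy.
- apply/andP; split; last by [].
  rewrite in_cons negb_or; apply/andP; split.
    by move: hu; rewrite in_cons negb_or => /andP [].
  by apply/negP => /h4 hus; move: hu; rewrite in_cons hus orbT.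
- by move=> z; rewrite !in_cons => /orP [->//|/h4 ->]; rewrite orbT.
- by rewrite lerD2l.
Qed.

Lemma sp_le_walk x s :
  path G' x s -> (sp pos G' x (last x s) <= (walk_len pos x s)%:E)%E.
Proof.
move=> hp.
have [s' [h1 h2 h3 h4 h5]] := shorten_walk (size s) x s (leqnn _) hp.
apply: (@le_trans _ _ (walk_len pos x s')%:E); last by rewrite lee_fin.
have hk : (size s' < n)%N.
  have := max_card (mem (x :: s')).
  by rewrite card_ord (card_uniqP h3) /=.
rewrite /sp.
apply: le_trans; first exact: (bigmin_le _ (Ordinal hk)).
rewrite /=.
apply: le_trans; first apply: (@bigmin_le_cond _ _ _ _ (in_tuple s')).
  by rewrite /= h1 h2 eqxx.
by [].
Qed.

Lemma sp_witness x y c : (sp pos G' x y <= c%:E)%E ->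
  exists s, [/\ path G' x s, last x s = y & (walk_len pos x s <= c)].
Proof.
rewrite /sp.
set K := fun z : \bar R => z = +oo%E \/ exists s, [/\ path G' x s, last x s = y
   & z = (walk_len pos x s)%:E].
have Kmin : forall u v, K u -> K v -> K (Order.min u v).
  by move=> u v hu hv; rewrite /Order.min; case: ifP.
have : K (\big[Order.min/+oo%E]_(k < n)
    \big[Order.min/+oo%E]_(t : k.-tuple 'I_n | path G' x t && (last x t == y))
       (walk_len pos x t)%:E).
  apply: big_ind => //; first by left.
  move=> k _; apply: big_ind => //; first by left.
  move=> t /andP [hp /eqP hl]; right; exists t; split => //.
case => [->|[s [h1 h2 ->]]] //.
by rewrite lee_fin => hc; exists s.
Qed.

Lemma edistC p q : @edist R d p q = edist q p.
Proof.
rewrite /edist; congr Num.sqrt; apply: eq_bigr => k _.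
by rewrite -sqrrN opprB.
Qed.

Lemma last_rev_belast (y : 'I_n) s : last (last y s) (rev (belast y s)) = y.
Proof.
case: s => [|z s] //=.
by rewrite rev_cons last_rcons.
Qed.

Lemma walk_len_rev x s :
  walk_len pos (last x s) (rev (belast x s)) = walk_len pos x s.
Proof.
elim: s x => [|y s IH] x //=.
rewrite rev_cons -cats1 walk_len_cat IH last_rev_belast /= addr0 addrC.
by rewrite edistC.
Qed.

Lemma walk_rev x s : symmetric G' -> path G' x s ->
  exists t, [/\ path G' (last x s) t, last (last x s) t = x &
     walk_len pos (last x s) t = walk_len pos x s].
Proof.
move=> hs hp; exists (rev (belast x s)); split.
- rewrite rev_path.
  have -> : path (fun z => G'^~ z) x s = path G' x s.
    by apply: eq_path => u v /=; rewrite hs.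
  exact: hp.
- exact: last_rev_belast.
- exact: walk_len_rev.
Qed.

End Aux.

Theorem lemma2p5 (R : rcfType) (n d : nat) (alpha r delta : R)
    (pos : 'I_n -> 'rV[R]_d) (E G' : rel 'I_n) (i : nat)
    (A : {set 'I_n}) (C : 'I_n -> {set 'I_n}) (a b : 'I_n) :
  0 < alpha -> alpha <= 1 -> 1 < r -> 0 < delta -> delta < 1 -> (0 < i)%N ->
  quasi_UBG alpha pos E ->
  (* G'_{i-1}: spanning subgraph of G (symmetric edge relation) *)
  symmetric G' -> (forall u v, G' u v -> E u v) ->
  (* partial spanner after phase i-1 only has edges of length <= W_{i-1} *)
  (forall u v, G' u v -> edist (pos u) (pos v) <= Wph r alpha n i.-1) ->
  cluster_cover pos G' (delta * Wph r alpha n i.-1) A C ->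
  inter_cluster_edge pos G' (Wph r alpha n i.-1) A C a b ->
  (sp pos G' a b <= ((2 * delta + 1) * Wph r alpha n i.-1)%:E)%E.
Proof.
move=> ha _ hr hd _ _ _ hsym _ hlen [_ _ hcov _] [Aa Ab _ hcase].
set W := Wph r alpha n i.-1 in hlen hcov hcase *.
have W0 : 0 <= W.
  rewrite /W /Wph divr_ge0 // mulr_ge0 ?exprn_ge0 ?ltW //.
  exact: lt_trans hr.
case: hcase => [h|[x [y [hx hy hxy]]]].
  apply: (le_trans h); rewrite lee_fin.
  rewrite -[X in X <= _]mul1r ler_wpM2r // lerDr mulr_ge0 // ltW //.
have [t1 [p1 l1 w1]] := @sp_witness _ _ _ pos G' _ _ _ (hcov a x Aa hx).
have [t2 [p2 l2 w2]] := @sp_witness _ _ _ pos G' _ _ _ (hcov b y Ab hy).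
have [t3 [p3 l3 w3]] := @walk_rev _ _ _ pos G' _ _ hsym p2.
rewrite l2 in p3 l3 w3.
have hp : path G' a (t1 ++ y :: t3).
  by rewrite cat_path p1 /= l1 hxy p3.
have := @sp_le_walk _ _ _ pos G' _ _ hp.
rewrite last_cat /= l3 => h; apply: (le_trans h); rewrite lee_fin.
rewrite walk_len_cat /= l1 w3.
have := hlen x y hxy.
lra.
Qed.
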